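(* For all positive integers $m$ and $k$, \[ \sigma_k(m)=\tau_k(m+1)-\tau_{k-1}(m). \]
   Context: $f_\lambda$ denotes the number of standard Young tableaux of shape $\lambda$, $l(\lambda)$ the number of parts and $d_\lambda$ the number of distinct parts of a partition $\lambda$. For integers $k\ge 0$, $n\ge 1$: $\tau_k(n)=\sum_{\lambda\vdash n,\ l(\lambda)\le k} f_\lambda$ (so $\tau_0(n)=0$) and $\sigma_k(n)=\sum_{\lambda\vdash n,\ l(\lambda)\le k} d_\lambda f_\lambda$. *)

(* Defs.v *)
From mathcomp Require Import all_boot all_order all_algebra.
Set Implicit Arguments. Unset Strict Implicit. Unset Printing Implicit Defensive.

Definition is_partition (n : nat) (l : seq nat) : bool :=
  [&& sorted geq l, all (fun x => 0 < x) l & sumn l == n].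

Definition tshape (n : nat) (t : n.-tuple 'I_n.+1) : seq nat :=
  filter (fun x => 0 < x) (map (@nat_of_ord _) t).

(* The list of all partitions of n, each listed once
   (a partition of n has at most n parts, each at most n). *)
Definition partitions (n : nat) : seq (seq nat) :=
  undup [seq tshape t | t <- enum {: n.-tuple 'I_n.+1} & is_partition n (tshape t)].

(* Cells of the Young diagram of lambda: (row, column), 0-indexed. *)
Definition in_diagram (lam : seq nat) (rc : nat * nat) : bool :=
  (rc.1 < size lam) && (rc.2 < nth 0 lam rc.1).

(* A standard Young tableau of shape lam (|lam| = n) is encoded by its inverse:
   the map T sending the entry i (i.e. the number i+1) to the cell it occupies.
   T must be injective with image in the diagram (hence a bijection, as the
   diagram has n cells), and entries must increase along rows and columns. *)
Definition is_SYT (lam : seq nat) (T : {ffun 'I_(sumn lam) -> 'I_(sumn lam) * 'I_(sumn lam)}) : bool :=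
  [&& injectiveb T,
      [forall i, in_diagram lam ((T i).1 : nat, (T i).2 : nat)] &
      [forall i, forall j,
         (((T i).1 <= (T j).1)%N && ((T i).2 <= (T j).2)%N) ==> (i <= j)%N]].

Definition f_SYT (lam : seq nat) : nat :=
  #|[set T : {ffun 'I_(sumn lam) -> 'I_(sumn lam) * 'I_(sumn lam)} | @is_SYT lam T]|.

Definition nparts (lam : seq nat) : nat := size lam.
Definition ndistinct (lam : seq nat) : nat := size (undup lam).

Definition tau (k n : nat) : nat :=
  \sum_(lam <- partitions n | nparts lam <= k) f_SYT lam.

Definition sigma (k n : nat) : nat :=
  \sum_(lam <- partitions n | nparts lam <= k) ndistinct lam * f_SYT lam.

(* Main.v *)
Require Import Defs.
From mathcomp Require Import all_boot all_order all_algebra zify.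
Set Implicit Arguments. Unset Strict Implicit. Unset Printing Implicit Defensive.


Definition dsorted (l : seq nat) := forall i, nth 0 l i.+1 <= nth 0 l i.

Lemma dsortedW l : dsorted l -> forall i j, i <= j -> nth 0 l j <= nth 0 l i.
Proof.
move=> H i j /subnK <-; elim: (j - i) => [|d IH] //=.
by rewrite addSn; apply: leq_trans (H _) IH.
Qed.

Lemma sorted_dsorted l : sorted geq l -> dsorted l.
Proof.
move=> /(sortedP 0) H i; case: (ltnP i.+1 (size l)) => Hi; first exact: H.
by rewrite nth_default.
Qed.

Lemma dsorted_sorted l : dsorted l -> sorted geq l.
Proof. by move=> H; apply/(sortedP 0) => i _; apply: H. Qed.

Definition cells (l : seq nat) : seq (nat * nat) :=
  [seq (r, c) | r <- iota 0 (size l), c <- iota 0 (nth 0 l r)].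

Lemma mem_cells l x : (x \in cells l) = in_diagram l x.
Proof.
apply/allpairsPdep/idP => [[r [c [Hr Hc ->]]]|].
  rewrite !mem_iota /= in Hr Hc; rewrite /in_diagram /=.
  by rewrite !add0n in Hr Hc; rewrite Hr Hc.
case: x => r c /andP [/= H1 H2]; exists r, c; by rewrite !mem_iota /= add0n H1 H2.
Qed.

Lemma size_cells l : size (cells l) = sumn l.
Proof.
rewrite size_allpairs_dep.
rewrite -[in RHS](mkseq_nth 0 l) /mkseq; congr sumn; apply: eq_map => r.
by rewrite size_iota.
Qed.

Lemma uniq_cells l : uniq (cells l).
Proof.
apply: allpairs_uniq_dep; first exact: iota_uniq.
  by move=> x _; exact: iota_uniq.
by move=> [r1 c1] [r2 c2] _ _ /= [-> ->].
Qed.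

Lemma sumn_set_nthX l r x : r < size l -> sumn (set_nth 0 l r x) + nth 0 l r = sumn l + x.
Proof.
elim: l r => [|a l IH] [|r] //= H; first by lia.
have := IH r H; lia.
Qed.


Definition corners (l : seq nat) := [seq r <- iota 0 (size l) | nth 0 l r.+1 < nth 0 l r].
Definition dec (l : seq nat) r := set_nth 0 l r (nth 0 l r).-1.
Definition cellle (a b : nat * nat) := (a.1 <= b.1) && (a.2 <= b.2).
Definition mono (w : seq (nat * nat)) := forall i j, i < size w -> j < size w ->
  cellle (nth (0,0) w i) (nth (0,0) w j) -> i <= j.
Definition valid l w := [/\ size w = sumn l, uniq w, all (in_diagram l) w & mono w].

Fixpoint sw k l : seq (seq (nat * nat)) :=
  if k is k'.+1 then
    [seq rcons w (r, (nth 0 l r).-1) | r <- corners l, w <- sw k' (dec l r)]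
  else [:: [::]].

Lemma mem_corners l r : (r \in corners l) = (r < size l) && (nth 0 l r.+1 < nth 0 l r).
Proof. by rewrite mem_filter mem_iota add0n andbC. Qed.

Lemma nth_dec l r i : nth 0 (dec l r) i = if i == r then (nth 0 l r).-1 else nth 0 l i.
Proof. by rewrite /dec nth_set_nth. Qed.

Lemma size_dec l r : r < size l -> size (dec l r) = size l.
Proof. by move=> H; rewrite /dec size_set_nth; apply/maxn_idPr. Qed.

Lemma sumn_dec l r : r < size l -> 0 < nth 0 l r -> sumn (dec l r) = (sumn l).-1.
Proof. move=> H1 H2; have := sumn_set_nthX (nth 0 l r).-1 H1; rewrite -/(dec l r); lia. Qed.

Lemma nth_le_sumn l i : nth 0 l i <= sumn l.
Proof. elim: l i => [|a l IH] [|i] //=; [lia | have := IH i; lia]. Qed.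

Lemma dsorted_dec l r : dsorted l -> r \in corners l -> dsorted (dec l r).
Proof.
move=> Hs; rewrite mem_corners => /andP [Hr Hc] i; rewrite !nth_dec.
have := Hs i; have := Hs i.+1.
case: (eqVneq i.+1 r) => [E1|E1]; case: (eqVneq i r) => [E2|E2]; subst => //=; try lia.
Qed.

Lemma in_diagram_dec l r x : r \in corners l ->
  in_diagram (dec l r) x = in_diagram l x && (x != (r, (nth 0 l r).-1)).
Proof.
rewrite mem_corners => /andP [Hr Hc]; case: x => a b.
rewrite /in_diagram /= size_dec // nth_dec xpair_eqE.
case: (eqVneq a r) => [->|Ha] /=; last by rewrite andbT.
rewrite Hr /=; apply/idP/idP; lia.
Qed.

Lemma corner_block l r x : dsorted l -> r \in corners l ->
  in_diagram (dec l r) x -> cellle (r, (nth 0 l r).-1) x -> False.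
Proof.
move=> Hs Hc; rewrite (in_diagram_dec _ Hc) => /andP [].
move: Hc; rewrite mem_corners => /andP [Hr Hc].
case: x => a b; rewrite /in_diagram /cellle /= xpair_eqE => /andP [Ha Hb] Hne /andP [H1 H2].
case: (eqVneq a r) => [Har|Har]; first by subst a; move: Hne; rewrite eqxx /=; lia.
have : r.+1 <= a by lia.
move/(dsortedW Hs); lia.
Qed.

Lemma valid_rcons l r w : dsorted l -> r \in corners l -> valid (dec l r) w ->
  valid l (rcons w (r, (nth 0 l r).-1)).
Proof.
move=> Hs Hc [Hsz Hu Ha Hm]; have Hc' := Hc; move: Hc'; rewrite mem_corners => /andP [Hr Hlt].
split.
- have := nth_le_sumn l r.
  by rewrite size_rcons Hsz sumn_dec //; lia.
- rewrite rcons_uniq Hu andbT; apply/negP => Hin.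
  by move/allP: Ha => /(_ _ Hin); rewrite (in_diagram_dec _ Hc) eqxx andbF.
- rewrite all_rcons /in_diagram /= Hr /=; apply/andP; split; first lia.
  apply/allP => x /(allP Ha); rewrite (in_diagram_dec _ Hc) => /andP [] //.
- move=> i j; rewrite size_rcons !nth_rcons => Hi Hj.
  rewrite ltnS leq_eqVlt in Hi; rewrite ltnS leq_eqVlt in Hj.
  move: Hi Hj => /orP [/eqP ->|Hi'] /orP [/eqP ->|Hj'].
  + by move=> _; rewrite leqnn.
  + rewrite ltnn eqxx Hj'.
    move=> Hle; exfalso; apply: (corner_block Hs Hc _ Hle).
    by apply: (allP Ha); apply: mem_nth.
  + by move=> _; apply: ltnW.
  + rewrite Hi' Hj'; exact: Hm.
Qed.

Lemma valid_last l w c : dsorted l -> valid l (rcons w c) ->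
  exists r, [/\ r \in corners l, c = (r, (nth 0 l r).-1) & valid (dec l r) w].
Proof.
move=> Hs [Hsz Hu Ha Hm].
have Hall : forall x, in_diagram l x -> x \in rcons w c.
  have [_ E] : (size (rcons w c) = size (cells l)) * (rcons w c =i cells l).
    apply: uniq_min_size Hu _ _.
    - by move=> y /(allP Ha); rewrite mem_cells.
    - by rewrite size_cells Hsz.
  by move=> x Hx; rewrite E mem_cells.
have Key : forall x, in_diagram l x -> cellle c x -> x = c.
  move=> x /Hall Hx Hle.
  have Hj : index x (rcons w c) < size (rcons w c) by rewrite index_mem.
  have Hn : size w < size (rcons w c) by rewrite size_rcons.
  have Hnc : nth (0,0) (rcons w c) (size w) = c by rewrite nth_rcons ltnn eqxx.
  have := Hm _ _ Hn Hj; rewrite Hnc nth_index // => /(_ Hle) Hle2.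
  have Hj' : index x (rcons w c) = size w by move: Hj; rewrite size_rcons; lia.
  by rewrite -(nth_index (0,0) Hx) Hj' Hnc.
have Hc : in_diagram l c by move: Ha; rewrite all_rcons => /andP [].
case: c Hc Key Hu Ha Hm Hall Hsz => r b Hc Key Hu Ha Hm Hall Hsz.
move: (Hc); rewrite /in_diagram /= => /andP [Hr Hb].
have Hb1 : b.+1 = nth 0 l r.
  case: (ltngtP b.+1 (nth 0 l r)) => // H; last lia.
  have : (r, b.+1) = (r, b) by apply: Key; rewrite /in_diagram /cellle /= ?Hr ?H ?leqnn //=.
  by case; lia.
have Hlt : nth 0 l r.+1 < nth 0 l r.
  rewrite ltnNge; apply/negP => H.
  have Hr1 : r.+1 < size l.
    rewrite ltnNge; apply/negP => H'; move: H; rewrite (nth_default 0 H'); lia.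
  have : (r.+1, b) = (r, b) by apply: Key; rewrite /in_diagram /cellle /=; apply/andP; split; lia.
  by case; lia.
have Hcor : r \in corners l by rewrite mem_corners Hr Hlt.
exists r; split => //; first by congr pair; lia.
split.
- move: Hsz; rewrite size_rcons sumn_dec //; lia.
- by move: Hu; rewrite rcons_uniq => /andP [].
- apply/allP => x Hx; rewrite (in_diagram_dec _ Hcor).
  apply/andP; split; first by apply: (allP Ha); rewrite mem_rcons inE Hx orbT.
  apply/eqP => E; have Eb : (nth 0 l r).-1 = b by lia.
  by move: Hu; rewrite rcons_uniq -Eb -E Hx.
- move=> i j Hi Hj; have := Hm i j; rewrite !size_rcons !nth_rcons Hi Hj; apply; lia.
Qed.

Lemma sw_spec k : forall l, dsorted l -> sumn l = k ->
  uniq (sw k l) /\ (forall w, w \in sw k l <-> valid l w).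
Proof.
elim: k => [|k IH] l Hs Hk /=.
  split => // w; rewrite inE; split => [/eqP ->|[Hsz _ _ _]].
    by split.
  by case: w Hsz => //= ? ?; rewrite Hk.
have HIH : forall r, r \in corners l ->
    uniq (sw k (dec l r)) /\ (forall w, w \in sw k (dec l r) <-> valid (dec l r) w).
  move=> r Hc; apply: IH; first exact: dsorted_dec.
  move: Hc; rewrite mem_corners => /andP [Hr Hlt]; rewrite sumn_dec //; lia.
split.
  apply: allpairs_uniq_dep.
  - exact/filter_uniq/iota_uniq.
  - by move=> r /HIH [].
  - move=> [r1 w1] [r2 w2] _ _ /= /rcons_inj [E1 [E2 _]].
    by subst.
move=> w; split.
  move/allpairsPdep => [r [w' [Hc Hw' ->]]].
  apply: valid_rcons => //; exact/((HIH r Hc).2).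
case/lastP: w => [|w c].
  by move=> [Hsz]; move: Hsz; rewrite Hk.
move=> Hv; have [r [Hc Ec Hv']] := valid_last Hs Hv.
apply/allpairsPdep; exists r, w; split => //; last by rewrite Ec.
exact/((HIH r Hc).2).
Qed.


Definition pv n (p : 'I_n * 'I_n) : nat * nat := ((p.1 : nat), (p.2 : nat)).

Lemma pv_inj n : injective (@pv n).
Proof.
move=> [a b] [c d] [E1 E2]; congr pair; exact: val_inj.
Qed.

Definition wT n (T : {ffun 'I_n -> 'I_n * 'I_n}) : seq (nat * nat) :=
  [seq pv (T i) | i <- enum 'I_n].

Lemma size_wT n T : size (@wT n T) = n.
Proof. by rewrite size_map size_enum_ord. Qed.

Lemma nth_wT n T (i : 'I_n) : nth (0,0) (@wT n T) i = pv (T i).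
Proof. by rewrite (nth_map i) ?size_enum_ord // nth_ord_enum. Qed.

Lemma wT_inj n : injective (@wT n).
Proof.
move=> T1 T2 E; apply/ffunP => i; apply: (@pv_inj n).
by rewrite -!nth_wT E.
Qed.

Lemma wT_uniq n (T : {ffun 'I_n -> 'I_n * 'I_n}) : uniq (wT T) = injectiveb T.
Proof.
have -> : wT T = map (@pv n) (map T (enum 'I_n)) by rewrite -map_comp.
by rewrite (map_inj_uniq (@pv_inj n)).
Qed.

Lemma is_SYT_valid l T : @is_SYT l T <-> valid l (wT T).
Proof.
rewrite /is_SYT; split.
- case/and3P => Hinj /forallP Hd /forallP Hm; split.
  + by rewrite size_wT.
  + by rewrite wT_uniq.
  + apply/allP => x /mapP [i _ ->]; exact: Hd.
  + move=> i j; rewrite size_wT => Hi Hj.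
    have := Hm (Ordinal Hi) => /forallP /(_ (Ordinal Hj)) /implyP.
    by rewrite -[i]/(nat_of_ord (Ordinal Hi)) -[j]/(nat_of_ord (Ordinal Hj)) !nth_wT.
- move=> [Hsz Hu Ha Hm]; apply/and3P; split.
  + by rewrite -wT_uniq.
  + apply/forallP => i; apply: (allP Ha); exact: map_f (mem_enum _ _).
  + apply/forallP => i; apply/forallP => j; apply/implyP => H.
    have := Hm i j; rewrite size_wT !nth_wT; apply => //.
Qed.

Lemma pos_lt_sumn l r : dsorted l -> 0 < nth 0 l r -> r < sumn l.
Proof.
elim: l r => [|a l IH] r Hs H; first by move: H; rewrite nth_nil.
case: r H => [|r] /= H; first lia.
have Hs' : dsorted l by move=> i; exact: (Hs i.+1).
have := IH r Hs' H; have := dsortedW Hs (i := 0) (j := r.+1) isT => /=; lia.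
Qed.

Lemma diag_bound l x : dsorted l -> in_diagram l x -> x.1 < sumn l /\ x.2 < sumn l.
Proof.
case: x => a b Hs /andP [/= Ha Hb]; split.
- by apply: pos_lt_sumn => //; lia.
- by apply: leq_trans Hb (nth_le_sumn _ _).
Qed.

Lemma valid_wT l w : dsorted l -> valid l w -> exists T, @wT (sumn l) T = w.
Proof.
move=> Hs [Hsz Hu Ha Hm].
exists [ffun i : 'I_(sumn l) => (insubd i (nth (0,0) w i).1, insubd i (nth (0,0) w i).2)].
apply: (@eq_from_nth _ (0,0)); first by rewrite size_wT.
move=> i; rewrite size_wT => Hi.
have Hw : nth (0,0) w i \in w by apply: mem_nth; rewrite Hsz.
have [B1 B2] := diag_bound Hs (allP Ha _ Hw).
have -> : i = nat_of_ord (Ordinal Hi) by [].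
rewrite nth_wT ffunE /pv /= !val_insubd /= B1 B2.
by case: (nth (0,0) w i).
Qed.

Lemma fSYT_sw l : dsorted l -> f_SYT l = size (sw (sumn l) l).
Proof.
move=> Hs; have [Hu Hmem] := sw_spec Hs erefl.
rewrite /f_SYT cardE -(size_map (@wT (sumn l))).
apply: perm_size; apply: uniq_perm.
- by rewrite (map_inj_uniq (@wT_inj _)) enum_uniq.
- exact: Hu.
move=> w; apply/mapP/idP.
- move=> [T]; rewrite mem_enum inE => /is_SYT_valid Hv ->; exact/Hmem.
- move/Hmem => Hv; have [T E] := valid_wT Hs Hv.
  exists T => //; rewrite mem_enum inE; apply/is_SYT_valid; by rewrite E.
Qed.


Definition nz (l : seq nat) := [seq x <- l | 0 < x].

Lemma sumn_nz l : sumn (nz l) = sumn l.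
Proof. elim: l => [|a l IH] //=; by case: a => [|a] /=; rewrite IH. Qed.

Lemma dsorted_cons a l : dsorted (a :: l) -> dsorted l.
Proof. by move=> H i; exact: (H i.+1). Qed.

Lemma nth_nz l i : dsorted l -> nth 0 (nz l) i = nth 0 l i.
Proof.
elim: l i => [|a l IH] i Hs //=.
have Hs' := dsorted_cons Hs.
case: a Hs => [|a] Hs /=.
- rewrite IH //; have H0 : forall j, nth 0 l j = 0.
    move=> j; have := dsortedW Hs (i := 0) (j := j.+1) isT => /=; lia.
  by case: i => [|i] /=; rewrite !H0.
- by case: i => [|i] //=; rewrite IH.
Qed.

Lemma in_diagramE l a b : in_diagram l (a, b) = (b < nth 0 l a).
Proof.
rewrite /in_diagram /=; case: (ltnP a (size l)) => H //=.
by rewrite nth_default.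
Qed.

Lemma nth_inj_pos l1 l2 : all (fun x => 0 < x) l1 -> all (fun x => 0 < x) l2 ->
  (forall i, nth 0 l1 i = nth 0 l2 i) -> l1 = l2.
Proof.
move=> H1 H2 E.
have Hs : forall l, all (fun x => 0 < x) l -> forall i, (i < size l) = (0 < nth 0 l i).
  move=> l Hl i; case: (ltnP i (size l)) => Hi; last by rewrite nth_default.
  by symmetry; apply: (allP Hl); apply: mem_nth.
apply: (@eq_from_nth _ 0) => [|i _]; last exact: E.
apply/eqP; rewrite eqn_leq; apply/andP; split; rewrite leqNgt; apply/negP => H.
- by move: H; rewrite (Hs _ H1) E -(Hs _ H2) ltnn.
- by move: H; rewrite (Hs _ H2) -E -(Hs _ H1) ltnn.
Qed.

Lemma f_SYT_ext l1 l2 : dsorted l1 -> dsorted l2 -> sumn l1 = sumn l2 ->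
  (forall i, nth 0 l1 i = nth 0 l2 i) -> f_SYT l1 = f_SYT l2.
Proof.
move=> Hs1 Hs2 Es En; rewrite !fSYT_sw //.
have [U1 M1] := sw_spec Hs1 erefl; have [U2 M2] := sw_spec Hs2 erefl.
apply: perm_size; apply: uniq_perm => // w.
have Hv : valid l1 w <-> valid l2 w.
  have D : in_diagram l1 =1 in_diagram l2 by move=> [a b]; rewrite !in_diagramE En.
  by rewrite /valid Es (eq_all D).
apply/idP/idP => [/M1/Hv/M2 | /M2/Hv/M1] //.
Qed.

Lemma f_SYT_nz l : dsorted l -> f_SYT (nz l) = f_SYT l.
Proof.
move=> Hs; apply: f_SYT_ext => //; last by move=> i; rewrite nth_nz.
- by move=> i; rewrite !nth_nz //.
- exact: sumn_nz.
Qed.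

Lemma branch l : dsorted l -> 0 < sumn l ->
  f_SYT l = \sum_(r <- corners l) f_SYT (dec l r).
Proof.
move=> Hs; rewrite fSYT_sw //; case E: (sumn l) => [|k] // _.
rewrite /= size_allpairs_dep.
rewrite sumnE big_map; apply: eq_big_seq => r Hr.
have Hr' := Hr; rewrite mem_corners in Hr'; case/andP: Hr' => H1 H2.
rewrite fSYT_sw ?sumn_dec ?E //; [lia | exact: dsorted_dec].
Qed.


Lemma mem_le_sumn (l : seq nat) x : x \in l -> x <= sumn l.
Proof. elim: l => [|a l IH] //=; rewrite inE => /orP [/eqP ->|/IH]; lia. Qed.

Lemma size_le_sumn (l : seq nat) : all (fun x => 0 < x) l -> size l <= sumn l.
Proof. elim: l => [|a l IH] //= /andP [H1 /IH]; lia. Qed.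

Lemma mem_partitions n l : (l \in partitions n) = is_partition n l.
Proof.
rewrite /partitions mem_undup; apply/mapP/idP.
  by move=> [t]; rewrite mem_filter => /andP [H _] ->.
move=> Hl; have Hl' := Hl; case/and3P: Hl' => Hs Hp /eqP Hn.
set s := map (fun x => @inord n x) (l ++ nseq (n - size l) 0).
have Hsz : size s == n.
  apply/eqP; rewrite size_map size_cat size_nseq; have := size_le_sumn Hp; rewrite Hn; exact: subnKC.
have Ht : tshape (Tuple Hsz) = l.
  rewrite /tshape /= /s -map_comp.
  have -> : [seq nat_of_ord (inord x : 'I_n.+1) | x <- l ++ nseq (n - size l) 0] =
            l ++ nseq (n - size l) 0.
    rewrite -[RHS]map_id; apply/eq_in_map => x; rewrite mem_cat => /orP [Hx|].
      by rewrite /= inordK // ltnS -Hn; apply: mem_le_sumn.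
    by move/nseqP => [-> _] /=; rewrite inordK.
  rewrite filter_cat (all_filterP Hp).
  have -> : [seq x <- nseq (n - size l) 0 | 0 < x] = [::].
    by elim: (n - size l).
  by rewrite cats0.
exists (Tuple Hsz) => //.
by rewrite mem_filter mem_enum andbT Ht.
Qed.


Definition Pos (l : seq nat) := all (fun x => 0 < x) l.
Definition addc (l : seq nat) a := set_nth 0 l a (nth 0 l a).+1.
Definition addable (l : seq nat) a := (a == 0) || (nth 0 l a < nth 0 l a.-1).

Lemma posP l : Pos l -> forall i, (0 < nth 0 l i) = (i < size l).
Proof.
move=> Hl i; case: (ltnP i (size l)) => Hi; last by rewrite nth_default.
by apply: (allP Hl); apply: mem_nth.
Qed.

Lemma nth_addc l a i : nth 0 (addc l a) i = if i == a then (nth 0 l a).+1 else nth 0 l i.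
Proof. by rewrite /addc nth_set_nth. Qed.

Lemma size_addc l a : size (addc l a) = maxn a.+1 (size l).
Proof. by rewrite /addc size_set_nth. Qed.

Lemma addable_le l a : addable l a -> a <= size l.
Proof.
rewrite /addable; case: a => [|a] //= H.
rewrite ltnNge; apply/negP => H'; move: H; rewrite (nth_default 0 H'); lia.
Qed.

Lemma pos_addc l a : Pos l -> a <= size l -> Pos (addc l a).
Proof.
move=> Hl Ha; apply/(all_nthP 0) => i; rewrite size_addc nth_addc => Hi.
case: eqP => [_|Hne] //; rewrite (posP Hl); lia.
Qed.

Lemma sumn_set_nth_le l r x : r <= size l -> sumn (set_nth 0 l r x) + nth 0 l r = sumn l + x.
Proof.
elim: l r => [|a l IH] [|r] //= H; try lia.
have := IH r H; lia.
Qed.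

Lemma sumn_addc l a : a <= size l -> sumn (addc l a) = (sumn l).+1.
Proof. move=> H; have := @sumn_set_nth_le l a (nth 0 l a).+1 H; rewrite -/(addc l a); lia. Qed.

Lemma dsorted_addc l a : dsorted l -> addable l a -> dsorted (addc l a).
Proof.
move=> Hs Ha i; rewrite !nth_addc; have := Hs i.
case: (eqVneq i.+1 a) => [E1|E1]; case: (eqVneq i a) => [E2|E2]; subst => //=; try lia.
Qed.

Lemma part_dsorted n l : is_partition n l -> dsorted l.
Proof. by case/and3P => /sorted_dsorted. Qed.

Lemma corner_pos l r : r \in corners l -> r < size l /\ 0 < nth 0 l r.
Proof. rewrite mem_corners => /andP [H1 H2]; split => //; lia. Qed.

Lemma rem_part m mu r : is_partition m.+1 mu -> r \in corners mu ->
  is_partition m (nz (dec mu r)).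
Proof.
move=> Hp Hc; have Hs := part_dsorted Hp; have [Hr Hpos] := corner_pos Hc.
have Hd := dsorted_dec Hs Hc.
apply/and3P; split.
- by apply: dsorted_sorted => i; rewrite !nth_nz //.
- exact: filter_all.
- case/and3P: Hp => _ _ /eqP Hn.
  by rewrite sumn_nz sumn_dec // Hn.
Qed.

Lemma rem_addable mu r : dsorted mu -> r \in corners mu -> addable (nz (dec mu r)) r.
Proof.
move=> Hs Hc; have [Hr Hpos] := corner_pos Hc; have Hd := dsorted_dec Hs Hc.
rewrite /addable !nth_nz // !nth_dec eqxx.
case: r Hc Hr Hpos Hd => [|r] //= Hc Hr Hpos Hd.
rewrite (_ : (r == r.+1) = false); last by apply/negbTE; rewrite neq_ltn ltnSn.
have := Hs r; lia.
Qed.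

Lemma add_rem m mu r : is_partition m.+1 mu -> r \in corners mu ->
  addc (nz (dec mu r)) r = mu.
Proof.
move=> Hp Hc; have Hs := part_dsorted Hp; have [Hr Hpos] := corner_pos Hc.
have Hd := dsorted_dec Hs Hc.
apply: nth_inj_pos.
- apply: pos_addc; first exact: filter_all.
  exact/addable_le/rem_addable.
- by case/and3P: Hp.
move=> i; rewrite nth_addc !nth_nz // !nth_dec.
case: eqP => [->|_]; rewrite ?eqxx //; lia.
Qed.

Lemma add_part m l a : is_partition m l -> addable l a -> is_partition m.+1 (addc l a).
Proof.
move=> Hp Ha; have Hs := part_dsorted Hp; case/and3P: Hp => _ Hpos /eqP Hn.
apply/and3P; split.
- exact/dsorted_sorted/dsorted_addc.
- exact/pos_addc/addable_le.
- by rewrite sumn_addc ?Hn //; apply: addable_le.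
Qed.

Lemma add_corner l a : dsorted l -> addable l a -> a \in corners (addc l a).
Proof.
move=> Hs Ha; rewrite mem_corners size_addc !nth_addc eqxx.
rewrite (_ : (a.+1 == a) = false); last by apply/negbTE; rewrite neq_ltn ltnSn orbT.
have := Hs a.
move=> H; apply/andP; split; lia.
Qed.

Lemma rem_add m l a : is_partition m l -> addable l a -> nz (dec (addc l a) a) = l.
Proof.
move=> Hp Ha; have Hs := part_dsorted Hp.
have Hp' := add_part Hp Ha; have Hs' := part_dsorted Hp'.
have Hc := add_corner Hs Ha.
apply: nth_inj_pos; first exact: filter_all.
- by case/and3P: Hp.
move=> i; rewrite nth_nz; last exact: dsorted_dec Hs' Hc.
rewrite nth_dec !nth_addc.
by case: (eqVneq i a) => [->|]; rewrite ?eqxx.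
Qed.


Lemma iota_succ n m : iota m.+1 n = map succn (iota m n).
Proof. by elim: n m => //= n IH m; rewrite IH. Qed.

Lemma head_mem x y l : dsorted (x :: y :: l) -> (x \in y :: l) = (y == x).
Proof.
move=> Hs; rewrite inE eq_sym; case: eqP => //= Hne; apply/negP => Hin.
have Hy := Hs 0; simpl in Hy.
have Hle : x <= y.
  rewrite -(nth_index 0 Hin).
  by have := dsortedW Hs (i := 1) (j := (index x l).+2) isT.
lia.
Qed.

Lemma count_addable l : dsorted l -> Pos l -> count (addable l) (iota 0 (size l)) = size (undup l).
Proof.
elim: l => [|x l IH] //= Hs /andP [Hx Hp].
have Hs' := dsorted_cons Hs.
case: l IH Hs Hs' Hp => [|y l] IH Hs Hs' Hp //=.
have {}IH := IH Hs' Hp; move: IH => /=.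
rewrite !iota_succ !count_map (head_mem Hs).
rewrite (@eq_count _ (preim succn (preim succn (addable [:: x, y & l])))
   (preim succn (addable (y :: l)))) //.
have Hyx := Hs 0; simpl in Hyx.
rewrite /addable /= eq_sym.
case: (ltngtP y x) => H //=; try lia.
Qed.


Definition S1 m k := [seq mu <- partitions m.+1 | nparts mu <= k].
Definition L1 m k := [seq (mu, r) | mu <- S1 m k, r <- corners mu].
Definition phiP (p : seq nat * nat) := (nz (dec p.1 p.2), p.2).
Definition Aset k (l : seq nat) := [seq a <- iota 0 (size l).+1 | addable l a && (size (addc l a) <= k)].
Definition L2 m k := [seq (l, a) | l <- partitions m, a <- Aset k l].

Lemma mem_L1 m k p : (p \in L1 m k) = [&& is_partition m.+1 p.1, size p.1 <= k & p.2 \in corners p.1].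
Proof.
apply/allpairsPdep/idP.
  move=> [mu [r [H1 H2 ->]]] /=; move: H1; rewrite mem_filter mem_partitions => /andP [-> ->].
  by rewrite H2.
case: p => mu r /= /and3P [H1 H2 H3]; exists mu, r; split => //.
by rewrite mem_filter mem_partitions H1 andbT.
Qed.

Lemma mem_L2 m k q : (q \in L2 m k) = [&& is_partition m q.1, addable q.1 q.2 & size (addc q.1 q.2) <= k].
Proof.
apply/allpairsPdep/idP.
  move=> [l [a [H1 H2 ->]]] /=; move: H1 H2; rewrite mem_partitions mem_filter => -> /andP [/andP [-> ->] _].
  done.
case: q => l a /= /and3P [H1 H2 H3]; exists l, a; split => //; first by rewrite mem_partitions.
rewrite /Aset mem_filter H2 H3 mem_iota add0n ltnS; exact: addable_le.
Qed.

Lemma uniq_L1 m k : uniq (L1 m k).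
Proof.
apply: allpairs_uniq_dep.
- exact/filter_uniq/undup_uniq.
- by move=> x _; exact/filter_uniq/iota_uniq.
- by move=> [a b] [c d] _ _ /= [-> ->].
Qed.

Lemma uniq_L2 m k : uniq (L2 m k).
Proof.
apply: allpairs_uniq_dep.
- exact: undup_uniq.
- by move=> x _; exact/filter_uniq/iota_uniq.
- by move=> [a b] [c d] _ _ /= [-> ->].
Qed.

Lemma perm_L m k : perm_eq (map phiP (L1 m k)) (L2 m k).
Proof.
apply: uniq_perm.
- rewrite map_inj_in_uniq ?uniq_L1 //.
  move=> [mu r] [mu' r'] ; rewrite !mem_L1 /phiP /= => /and3P [H1 _ H3] /and3P [H1' _ H3'] [E1 E2].
  subst r'; congr pair.
  by rewrite -(add_rem H1 H3) -(add_rem H1' H3') E1.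
- exact: uniq_L2.
move=> [l a]; rewrite mem_L2 /=; apply/mapP/idP.
- move=> [[mu r]]; rewrite mem_L1 /phiP /= => /and3P [H1 H2 H3] [-> ->].
  rewrite (rem_part H1 H3) (rem_addable (part_dsorted H1) H3) /=.
  by rewrite (add_rem H1 H3).
- move=> /and3P [H1 H2 H3]; exists (addc l a, a); last by rewrite /phiP /= (rem_add H1 H2).
  by rewrite mem_L1 /= (add_part H1 H2) H3 (add_corner (part_dsorted H1) H2).
Qed.

Lemma size_Aset m k l : is_partition m l ->
  size (Aset k l) = (size l <= k) * size (undup l) + (size l < k).
Proof.
move=> Hp; have Hs := part_dsorted Hp; have Hpos : Pos l by case/and3P: Hp.
rewrite /Aset size_filter -addn1 iotaD count_cat add0n /=.
have -> : addable l (size l).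
  rewrite /addable (nth_default 0 (leqnn _)) (posP Hpos).
  by case: (size l) => [|s] //=.
rewrite size_addc /= (_ : maxn (size l).+1 (size l) = (size l).+1); last lia.
rewrite addn0; congr addn.
rewrite (@eq_in_count _ _ (fun a => addable l a && (size l <= k))); last first.
  move=> a; rewrite mem_iota add0n => /andP [_ Ha]; rewrite size_addc.
  by rewrite (_ : maxn a.+1 (size l) = size l) //; lia.
case: (size l <= k) => /=.
- by rewrite mul1n (eq_count (a2 := addable l)) ?count_addable // => a; rewrite andbT.
- by rewrite mul0n (eq_count (a2 := pred0)) ?count_pred0 // => a; rewrite andbF.
by rewrite addn1.
Qed.

Lemma sum_const_size (T : Type) (s : seq T) c : \sum_(x <- s) c = size s * c.
Proof. by elim: s => [|x s IH]; rewrite ?big_nil ?big_cons ?IH //=; lia. Qed.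

Lemma tau_succ m k : 0 < k -> tau k m.+1 = sigma k m + tau k.-1 m.
Proof.
move=> Hk.
have E0 : tau k m.+1 = \sum_(mu <- S1 m k) \sum_(r <- corners mu) f_SYT (nz (dec mu r)).
  rewrite /tau -big_filter; apply: eq_big_seq => mu; rewrite mem_filter mem_partitions.
  move=> /andP [_ Hp]; have Hs := part_dsorted Hp.
  rewrite branch //; last by case/and3P: Hp => _ _ /eqP ->.
  apply: eq_big_seq => r Hr; rewrite f_SYT_nz //; exact: dsorted_dec.
have E1 : \sum_(mu <- S1 m k) \sum_(r <- corners mu) f_SYT (nz (dec mu r)) =
          \sum_(p <- L1 m k) f_SYT (phiP p).1 by rewrite big_allpairs_dep.
have E2 : \sum_(p <- L1 m k) f_SYT (phiP p).1 = \sum_(q <- L2 m k) f_SYT q.1.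
  rewrite -(big_map phiP xpredT (fun q => f_SYT q.1)); apply: perm_big; exact: perm_L.
have E3 : \sum_(q <- L2 m k) f_SYT q.1 = \sum_(l <- partitions m) size (Aset k l) * f_SYT l.
  by rewrite big_allpairs_dep; apply: eq_bigr => l _; rewrite -sum_const_size.
rewrite E0 E1 E2 E3.
transitivity (\sum_(l <- partitions m)
   ((size l <= k) * (ndistinct l * f_SYT l) + (size l <= k.-1) * f_SYT l)).
  apply: eq_big_seq => l; rewrite mem_partitions => Hp; rewrite (size_Aset _ Hp).
  rewrite /ndistinct (_ : (size l < k) = (size l <= k.-1)); last by apply/idP/idP; lia.
  by rewrite mulnDl mulnA.
rewrite big_split /sigma /tau; congr addn; rewrite [RHS]big_mkcond; apply: eq_bigr => l _; rewrite /nparts; by case: ifP => _ /=; rewrite ?mul1n ?mul0n.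
Qed.


Theorem mainTheorem8 (m k : nat) (hm : (0 < m)%N) (hk : (0 < k)%N) :
  ((sigma k m)%:Z = (tau k m.+1)%:Z - (tau k.-1 m)%:Z)%R.
Proof. by rewrite (tau_succ _ hk) PoszD GRing.addrK. Qed.
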